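(* Let $\rho,\sigma$ be commuting quantum states on a finite-dimensional Hilbert space and $\rho',\sigma'$ commuting quantum states on a (possibly different) finite-dimensional Hilbert space, with $\sigma,\sigma'$ both full-rank. If $(\rho,\sigma)\succ(\rho',\sigma')$, then $M_{s_{\min}}(\rho'\|\sigma')\ge M_{s_{\min}}(\rho\|\sigma)$, where $$M_x(\rho\|\sigma):=V(\rho\|\sigma)+\left(\frac{1}{\ln 2}-\log(x)-S(\rho\|\sigma)\right)^2$$ and $s_{\min}$ denotes the smallest eigenvalue of $\sigma$.
   Context: Logs are base 2 unless written $\ln$. $S(\rho\|\sigma)=\mathrm{Tr}(\rho(\log\rho-\log\sigma))$, $V(\rho\|\sigma)=\mathrm{Tr}(\rho(\log\rho-\log\sigma)^2)-S(\rho\|\sigma)^2$. $(\rho,\sigma)\succ(\rho',\sigma')$ means there is a quantum channel $\mathcal E$ with $\mathcal E(\rho)=\rho'$ and $\mathcal E(\sigma)=\sigma'$. *)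

(* Defs.v *)
From HB Require Import structures.
From mathcomp Require Import all_boot all_order all_algebra.
From mathcomp Require Import complex.
From mathcomp Require Import reals exp.

Set Implicit Arguments.
Unset Strict Implicit.
Unset Printing Implicit Defensive.

Import Order.TTheory GRing.Theory Num.Theory.
Local Open Scope ring_scope.
Local Open Scope complex_scope.

Section QInfo.
Variable R : realType.
Local Notation C := R[i].

Definition adj m n (A : 'M[C]_(m, n)) : 'M[C]_(n, m) := (map_mx Num.conj A)^T.

Definition hermitian n (A : 'M[C]_n) : Prop := adj A = A.

Definition psd n (A : 'M[C]_n) : Prop :=
  hermitian A /\ forall v : 'rV[C]_n, 0 <= (v *m A *m adj v) 0 0.

Definition is_state n (A : 'M[C]_n) : Prop := psd A /\ \tr A = 1.

Definition full_rank n (A : 'M[C]_n) : Prop := \rank A = n.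

Definition mxcommute n (A B : 'M[C]_n) : Prop := A *m B = B *m A.

Definition kraus_channel n m (Ks : seq 'M[C]_(m, n)) (X : 'M[C]_n) : 'M[C]_m :=
  \sum_(K <- Ks) (K *m X *m adj K).

Definition is_kraus n m (Ks : seq 'M[C]_(m, n)) : Prop :=
  \sum_(K <- Ks) (adj K *m K) = 1%:M.

Definition majorizes n m (rho sigma : 'M[C]_n) (rho' sigma' : 'M[C]_m) : Prop :=
  exists Ks : seq 'M[C]_(m, n), is_kraus Ks /\
    kraus_channel Ks rho = rho' /\ kraus_channel Ks sigma = sigma'.

Definition mxfun (f : R -> R) n (A : 'M[C]_n) : 'M[C]_n :=
  invmx (spectralmx A) *m
  diag_mx (map_mx (fun z : C => (f (complex.Re z))%:C) (spectral_diag A)) *m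
  spectralmx A.

(* logarithm base 2 (ln is mathcomp-analysis' natural log; ln 0 = 0, so the
   matrix log of a PSD matrix is taken on its support) *)
Definition log2 (x : R) : R := ln x / ln 2.

Definition logm n (A : 'M[C]_n) : 'M[C]_n := mxfun log2 A.

Definition relent n (rho sigma : 'M[C]_n) : R :=
  complex.Re (\tr (rho *m (logm rho - logm sigma))).

Definition relvar n (rho sigma : 'M[C]_n) : R :=
  let L := logm rho - logm sigma in
  complex.Re (\tr (rho *m (L *m L))) - relent rho sigma ^+ 2.

Definition Mx (x : R) n (rho sigma : 'M[C]_n) : R :=
  relvar rho sigma + (1 / ln 2 - log2 x - relent rho sigma) ^+ 2.

Definition min_eigenvalue n (A : 'M[C]_n) (s : R) : Prop :=
  eigenvalue A (s%:C) /\ forall l : C, eigenvalue A l -> s%:C <= l.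

End QInfo.

(* Main.v *)
Require Import Defs.
From HB Require Import structures.
From mathcomp Require Import all_boot all_order all_algebra.
From mathcomp Require Import complex.
From mathcomp Require Import reals exp.
From mathcomp Require Import spectral sesquilinear.
From mathcomp Require Import boolp classical_sets topology normedtype sequences derive realfun.
From mathcomp Require Import ring lra.

Import Order.TTheory GRing.Theory Num.Theory.
Local Open Scope ring_scope.
Local Open Scope complex_scope.

Set Implicit Arguments.
Unset Strict Implicit.
Unset Printing Implicit Defensive.

Module RealPart.
Import numFieldNormedType.Exports.
Section T.
Variable R : realType.
Lemma K1 (y : R) : 0 <= y -> y ^+ 2 <= 2 * (expR y - 1 - y).
Proof.
move=> y0.
pose f (x : R) := 2 * (expR x - 1 - x) - x ^+ 2.
pose df (x : R) := 2 * (expR x - 1 - x).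
have D (x : R) : is_derive x (1:R) f (df x).
  rewrite /f /df.
  apply: is_derive_eq.
  by rewrite /GRing.scale /= !mulr1 subr0; lra.
have [c _ Hc] := @MVT_segment R f df 0 y y0 (fun x _ => D x)
  (derivable_within_continuous (fun x _ => @ex_derive _ _ _ _ _ _ _ (D x))).
have : 0 <= df c * (y - 0) by rewrite /df subr0 mulr_ge0 // mulr_ge0 //; have := expR_ge1Dx c; lra.
rewrite -Hc /f expR0; lra.
Qed.

Lemma K2 (y : R) : y <= 0 -> y ^+ 2 <= 2 * (1 - y) * (expR y - 1 - y).
Proof.
move=> y0.
pose f (x : R) := 2 * (1 - x) * (expR x - 1 - x) - x ^+ 2.
pose df (x : R) := 2 * x * (1 - expR x).
have D (x : R) : is_derive x (1:R) f (df x).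
  rewrite /f /df.
  apply: is_derive_eq.
  by rewrite /GRing.scale /= !mulr1 subr0; lra.
have [c] := @MVT_segment R f df y 0 y0 (fun x _ => D x)
  (derivable_within_continuous (fun x _ => @ex_derive _ _ _ _ _ _ _ (D x))).
rewrite in_itv /= => /andP[_ c0] Hc.
have : df c * (0 - y) <= 0.
  have e1 : expR c <= 1 by rewrite expR_le1.
  have h1 : 2 * c * (1 - expR c) <= 0 by nra.
  rewrite /df; nra.
rewrite -Hc /f expR0; lra.
Qed.


Lemma Key (L y : R) : L <= 0 -> L <= y -> y ^+ 2 <= 2 * (1 - L) * (expR y - 1 - y).
Proof.
move=> L0 Ly; have e0 : 0 <= expR y - 1 - y by have := expR_ge1Dx y; lra.
have [y0|y0] := leP 0 y.
  have := @K1 y y0; nra.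
have := @K2 y (ltW y0); nra.
Qed.

Lemma Tangent (a p q P Q : R) : 0 < a -> 0 < p -> 0 < q -> 0 < P -> 0 < Q ->
  a * p <= q -> a * P <= Q ->
  p * (ln a + ln p - ln q - 1) ^+ 2 <=
  2 * (1 - (ln a + ln P - ln Q)) * (q * P / Q) + ((ln a + ln P - ln Q) ^+ 2 - 1) * p.
Proof.
move=> a0 p0 q0 P0 Q0 apq aPQ.
have M0 : ln a + ln p - ln q <= 0.
  by rewrite subr_le0 -lnM ?posrE // ler_ln ?posrE // mulr_gt0.
have L0 : ln a + ln P - ln Q <= 0.
  by rewrite subr_le0 -lnM ?posrE // ler_ln ?posrE // mulr_gt0.
set L := ln a + ln P - ln Q in L0 *.
set M := ln a + ln p - ln q in M0 *.
have ey : q * P / Q = p * expR (L - M).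
  have -> : L - M = (ln P + ln q) - (ln Q + ln p) by rewrite /L /M; ring.
  rewrite expRB !expRD !lnK ?posrE //; field.
  by rewrite !gt_eqF.
have key : (L - M) ^+ 2 <= 2 * (1 - L) * (expR (L - M) - 1 - (L - M)).
  by apply: Key => //; lra.
have key' := ler_wpM2l (ltW p0) key.
rewrite ey; set e := expR (L - M) in key' *.
have -> : M = L - (L - M) by ring.
set y := L - M in key' *.
nra.
Qed.

Definition phi (a p q : R) := p * (ln a + ln p - ln q - 1) ^+ 2.

Lemma sum_lin n (al p q : 'I_n -> R) (A B : R) :
  \sum_i al i * (A * q i + B * p i) = A * (\sum_i al i * q i) + B * (\sum_i al i * p i).
Proof.
rewrite !mulr_sumr -big_split /=; apply: eq_bigr => i _; ring.
Qed.

Lemma ClassJ (a : R) n (al p q : 'I_n -> R) : 0 < a ->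
  (forall i, 0 <= al i) -> (forall i, 0 <= p i) -> (forall i, 0 < q i) ->
  (forall i, a * p i <= q i) -> 0 < \sum_i al i * q i ->
  \sum_i al i * phi a (p i) (q i) <=
  phi a (\sum_i al i * p i) (\sum_i al i * q i).
Proof.
move=> a0 al0 p0 q0 apq Q0.
set P := \sum_i al i * p i; set Q := \sum_i al i * q i.
have P0 : 0 <= P by apply: sumr_ge0 => i _; apply: mulr_ge0.
have aPQ : a * P <= Q.
  rewrite /P mulr_sumr; apply: ler_sum => i _.
  have := apq i; have := al0 i; nra.
have [Pz|Ppos] := eqVneq P 0.
  have H : forall i, al i * p i = 0.
    move=> i; apply: (psumr_eq0P _ Pz) => // j _; exact: mulr_ge0.
  rewrite big1 ?Pz /phi ?mul0r // => i _; rewrite /phi mulrA H mul0r //.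
have {Ppos}Ppos : 0 < P by rewrite lt_def Ppos.
have L0 : ln a + ln P - ln Q <= 0.
  by rewrite subr_le0 -lnM ?posrE // ler_ln ?posrE // mulr_gt0.
set L := ln a + ln P - ln Q in L0 *.
apply: (@le_trans _ _ (\sum_i al i * ((2 * (1 - L) * P / Q) * q i + (L ^+ 2 - 1) * p i))).
  apply: ler_sum => i _; apply: ler_wpM2l => //.
  have [pz|ppos] := eqVneq (p i) 0.
    rewrite /phi pz mul0r mulr0 addr0; apply: mulr_ge0 => //; last exact: ltW.
    apply: divr_ge0; last exact: ltW.
    apply: mulr_ge0 => //; lra.
  have := @Tangent a (p i) (q i) P Q a0 _ (q0 i) Ppos Q0 (apq i) aPQ.
  rewrite /phi -/L; have -> : 2 * (1 - L) * P / Q * q i = 2 * (1 - L) * (q i * P / Q).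
    by ring.
  apply; rewrite lt_def ppos; exact: p0.
rewrite sum_lin /phi -/P -/Q -/L.
have -> : 2 * (1 - L) * P / Q * Q = 2 * (1 - L) * P by rewrite mulfVK // gt_eqF.
rewrite le_eqVlt; apply/orP; left; apply/eqP; ring.
Qed.
End T.

End RealPart.
Import RealPart.

Local Open Scope sesquilinear_scope.
Section Mat.
Variable R : realType.
Local Notation C := R[i].

Lemma adjE m n (A : 'M[C]_(m,n)) : adj A = A ^t*.
Proof. by rewrite /adj map_trmx. Qed.

Lemma unitary_tK n (P : 'M[C]_n) : P \is unitarymx -> P ^t* *m P = 1%:M.
Proof. by move=> uP; rewrite -invmx_unitary // mulVmx // unitarymx_unit. Qed.

Lemma unitary_Kt n (P : 'M[C]_n) : P \is unitarymx -> P *m P ^t* = 1%:M.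
Proof. by move/unitarymxP. Qed.

Definition cj_def n (P : 'M[C]_n) (d : 'rV[C]_n) := P ^t* *m diag_mx d *m P.
Fact cj_key : unit. Proof. exact: tt. Qed.
Definition cj n (P : 'M[C]_n) (d : 'rV[C]_n) := locked_with cj_key (@cj_def n) P d.
Lemma cjE n (P : 'M[C]_n) (d : 'rV[C]_n) : cj P d = P ^t* *m diag_mx d *m P.
Proof. by rewrite /cj unlock. Qed.

Lemma cjM n (P : 'M[C]_n) (d e : 'rV[C]_n) : P \is unitarymx ->
  cj P d *m cj P e = cj P (\row_j (d 0 j * e 0 j)).
Proof.
move=> uP; rewrite !cjE !mulmxA -[_ *m P *m P^t*]mulmxA unitary_Kt // mulmx1.
by rewrite -[_ *m diag_mx d *m _]mulmxA mulmx_diag.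
Qed.

Lemma cjB n (P : 'M[C]_n) (d e : 'rV[C]_n) : cj P d - cj P e = cj P (d - e).
Proof.
rewrite !cjE -mulmxBl -mulmxBr; congr (_ *m _ *m _).
by apply/matrixP => i j; rewrite !mxE mulrnBl.
Qed.

Lemma cj_tr n (P : 'M[C]_n) (d : 'rV[C]_n) : P \is unitarymx ->
  \tr (cj P d) = \sum_j d 0 j.
Proof.
by move=> uP; rewrite !cjE mxtrace_mulC mulmxA unitary_Kt // mul1mx mxtrace_diag.
Qed.

Lemma delta_diag n (d : 'rV[C]_n) i :
  (delta_mx 0 i : 'rV[C]_n) *m diag_mx d = d 0 i *: delta_mx 0 i.
Proof.
apply/matrixP => a b; rewrite mul_mx_diag !mxE.
have [->|nb] := eqVneq b i; first by rewrite andbT mulrC.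
by rewrite andbF mul0r mulr0.
Qed.

Lemma cj_row n (P : 'M[C]_n) (d : 'rV[C]_n) i : P \is unitarymx ->
  (delta_mx 0 i : 'rV[C]_n) *m P *m cj P d = d 0 i *: (delta_mx 0 i *m P).
Proof.
move=> uP; rewrite !cjE !mulmxA -[_ *m P *m P^t*]mulmxA unitary_Kt // mulmx1.
by rewrite delta_diag scalemxAl.
Qed.

Lemma delta_tC n (i : 'I_n) : (delta_mx 0 i : 'rV[C]_n) ^t* = delta_mx i 0.
Proof.
apply/matrixP => a b; rewrite !mxE.
by rewrite andbC rmorph_nat.
Qed.

Lemma cj_form n (P : 'M[C]_n) (d : 'rV[C]_n) i : P \is unitarymx ->
  ((delta_mx 0 i : 'rV[C]_n) *m P *m cj P d *m adj ((delta_mx 0 i : 'rV[C]_n) *m P)) 0 0 = d 0 i.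
Proof.
move=> uP; rewrite cj_row // -scalemxAl adjE trmx_mul map_mxM mulmxA.
rewrite -[_ *m P *m P^t*]mulmxA unitary_Kt // mulmx1 delta_tC mul_delta_mx !mxE.
by rewrite !eqxx mulr1.
Qed.


Lemma herm_trig_cj n (P : 'M[C]_n) (X : 'M[C]_n) : P \is unitarymx ->
  adj X = X -> similar_trig P X -> X = cj P (\row_j (P *m X *m P^t*) j j).
Proof.
move=> uP hX; rewrite /similar_to conjumx ?unitarymx_unit // invmx_unitary //.
set D := P *m X *m P^t* => tX.
have hX' : X ^t* = X by rewrite -adjE.
have hD : D ^t* = D by rewrite /D !trmx_mul !map_mxM trmxCK hX' mulmxA.
move/is_trig_mxP: tX => tX.
have Dd : D = diag_mx (\row_j D j j).
  apply/matrixP => i j; rewrite [RHS]mxE [(\row_j _) 0 i]mxE.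
  case: (ltngtP i j) => [lt|gt|eq].
  - have -> : (i == j) = false by apply/eqP => ij; move: lt; rewrite ij ltnn.
    by rewrite (tX i j lt).
  - have -> : D i j = Num.conj (D j i) by rewrite -{1}hD mxE [D^T _ _]mxE.
    have -> : (i == j) = false by apply/eqP => ij; move: gt; rewrite ij ltnn.
    by rewrite (tX j i gt) rmorph0.
  - have ij : i = j by apply: val_inj.
    by rewrite ij eqxx mulr1n.
by rewrite !cjE -Dd /D !mulmxA unitary_tK // mul1mx -mulmxA unitary_tK // mulmx1.
Qed.

Lemma diagonalize n (A B : 'M[C]_n) : adj A = A -> adj B = B -> A *m B = B *m A ->
  exists P, [/\ P \is unitarymx, A = cj P (\row_j (P *m A *m P^t*) j j)
    & B = cj P (\row_j (P *m B *m P^t*) j j)].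
Proof.
move=> hA hB AB; have [P uP /andP[tA tB]] := cotrigonalization2 AB.
exists P; split. exact: uP.
exact: (herm_trig_cj uP hA tA).
exact: (herm_trig_cj uP hB tB).
Qed.
Lemma mxfun_cj f n (P : 'M[C]_n) d : P \is unitarymx ->
  mxfun f (cj P d) = cj P (map_mx (fun z : C => (f (complex.Re z))%:C) d).
Proof.
move=> uP; set A := cj P d.
have nA : A \is normalmx.
  by apply/orthomx_spectral_subproof; exists (P, d) => //=; rewrite invmx_unitary // /A cjE.
move/orthomx_spectralP: nA => eA.
rewrite /mxfun.
set g := (fun z : C => (f (complex.Re z))%:C).
set U := spectralmx A in eA *; set e := spectral_diag A in eA *.
have uU : U \is unitarymx := spectral_unitarymx A.
have e1 : U *m A *m P^t* = diag_mx e *m (U *m P^t*).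
  by rewrite {1}eA !mulmxA (mulmxV (unitarymx_unit uU)) mul1mx.
have e2 : U *m A *m P^t* = (U *m P^t*) *m diag_mx d.
  by rewrite /A !cjE !mulmxA -[_ *m P *m P^t*]mulmxA (unitary_Kt uP) mulmx1.
have ent i j : e 0 i * (U *m P^t*) i j = (U *m P^t*) i j * d 0 j.
  move/matrixP: (etrans (esym e1) e2) => /(_ i j).
  by rewrite mul_diag_mx mul_mx_diag [LHS]mxE [RHS]mxE.
have comm : diag_mx (map_mx g e) *m (U *m P^t*) = (U *m P^t*) *m diag_mx (map_mx g d).
  apply/matrixP => i j; rewrite mul_diag_mx mul_mx_diag [LHS]mxE [RHS]mxE [map_mx g e 0 i]mxE [map_mx g d 0 j]mxE.
  have [Wz|Wnz] := eqVneq ((U *m P^t*) i j) 0; first by rewrite Wz mulr0 mul0r.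
  have -> : e 0 i = d 0 j by apply: (mulIf Wnz); rewrite ent mulrC.
  by rewrite mulrC.
have UW : U = (U *m P^t*) *m P by rewrite -mulmxA (unitary_tK uP) mulmx1.
rewrite cjE [in X in _ *m X]UW mulmxA -[invmx U *m _ *m (U *m P^t*)]mulmxA comm mulmxA.
by rewrite [invmx U *m _]mulmxA (mulVmx (unitarymx_unit uU)) mul1mx.
Qed.


Lemma delta_neq0 n (i : 'I_n) : (delta_mx 0 i : 'rV[C]_n) != 0.
Proof.
apply/negP => /eqP/matrixP/(_ 0 i); rewrite !mxE !eqxx /= => /eqP.
by rewrite oner_eq0.
Qed.

Lemma rowP_neq0 n (P : 'M[C]_n) i : P \is unitarymx ->
  (delta_mx 0 i : 'rV[C]_n) *m P != 0.
Proof.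
move=> uP; apply: contraNneq (delta_neq0 i) => h; apply/eqP.
by rewrite -[LHS]mulmx1 -(unitary_Kt uP) mulmxA h mul0mx.
Qed.

Lemma state_cj n (P : 'M[C]_n) a : P \is unitarymx -> is_state (cj P a) ->
  [/\ forall j, a 0 j = (complex.Re (a 0 j))%:C, forall j, 0 <= complex.Re (a 0 j)
    & \sum_j complex.Re (a 0 j) = 1].
Proof.
move=> uP [[_ psdA] trA].
have h j : 0 <= a 0 j by rewrite -(cj_form a j uP); apply: psdA.
have hr j : a 0 j = (complex.Re (a 0 j))%:C.
  by move: (h j); case: (a 0 j) => x y; rewrite lecE /= => /andP[/eqP -> _].
split => //.
  by move=> j; move: (h j); rewrite lecE => /andP[_].
move: trA; rewrite cj_tr // (eq_bigr _ (fun j _ => hr j)) -rmorph_sum.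
by move/(congr1 (@complex.Re R)).
Qed.

Lemma cj_unit_neq0 n (P : 'M[C]_n) a i : P \is unitarymx -> cj P a \in unitmx ->
  a 0 i != 0.
Proof.
move=> uP ua; apply/eqP => a0.
have := rowP_neq0 i uP; apply/negP; rewrite negbK.
have h := cj_row a i uP; rewrite a0 scale0r in h.
by rewrite -[X in X == 0](mulmxK ua) h mul0mx.
Qed.

Lemma cj_eigen n (P : 'M[C]_n) a i : P \is unitarymx -> eigenvalue (cj P a) (a 0 i).
Proof.
move=> uP; apply/eigenvalueP; exists ((delta_mx 0 i : 'rV[C]_n) *m P).
  exact: cj_row.
exact: rowP_neq0.
Qed.

Lemma eigen_cj n (P : 'M[C]_n) a s : P \is unitarymx -> eigenvalue (cj P a) s ->
  exists i, s = a 0 i.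
Proof.
move=> uP /eigenvalueP [v vA vnz].
have wnz : v *m P^t* != 0.
  apply: contraNneq vnz => h; apply/eqP.
  by rewrite -[LHS]mulmx1 -(unitary_tK uP) mulmxA h mul0mx.
have wd : v *m P^t* *m diag_mx a = s *: (v *m P^t*).
  have := congr1 (mulmx^~ (P^t*)) vA.
  rewrite !cjE !mulmxA -[_ *m P *m P^t*]mulmxA (unitary_Kt uP) mulmx1 -scalemxAl.
  by [].
have [j wj] : exists j, (v *m P^t*) 0 j != 0.
  apply/existsP; apply: contraNT wnz => /existsPn H; apply/eqP/rowP => j.
  by rewrite [RHS]mxE; apply/eqP; move: (H j); rewrite negbK.
exists j; move/rowP: wd => /(_ j); rewrite mul_mx_diag [LHS]mxE [RHS]mxE => h.
by apply: (mulIf wj); rewrite -h mulrC.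
Qed.

Lemma kraus_cj n m (Ks : seq 'M[C]_(m,n)) (P : 'M[C]_n) (Q : 'M[C]_m) a :
  Q *m kraus_channel Ks (cj P a) *m Q^t* =
  \sum_(K <- Ks) (Q *m K *m P^t*) *m diag_mx a *m (Q *m K *m P^t*)^t*.
Proof.
rewrite /kraus_channel mulmx_sumr mulmx_suml; apply: eq_bigr => K _.
by rewrite adjE !cjE !trmx_mul !map_mxM trmxCK !mulmxA.
Qed.

Lemma diag_entry m n (B : 'M[C]_(m,n)) (a : 'rV[C]_n) j :
  (B *m diag_mx a *m B^t*) j j = \sum_i (B j i * Num.conj (B j i)) * a 0 i.
Proof.
rewrite [LHS]mxE; apply: eq_bigr => i _; rewrite mul_mx_diag !mxE.
by rewrite mulrAC.
Qed.

Lemma kraus_sum n m (Ks : seq 'M[C]_(m,n)) (P : 'M[C]_n) (Q : 'M[C]_m) :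
  P \is unitarymx -> Q \is unitarymx -> is_kraus Ks ->
  \sum_(K <- Ks) (Q *m K *m P^t*)^t* *m (Q *m K *m P^t*) = 1%:M.
Proof.
move=> uP uQ kK.
have -> : \sum_(K <- Ks) (Q *m K *m P^t*)^t* *m (Q *m K *m P^t*) =
    P *m (\sum_(K <- Ks) adj K *m K) *m P^t*.
  rewrite mulmx_sumr mulmx_suml; apply: eq_bigr => K _.
  rewrite adjE !trmx_mul !map_mxM trmxCK !mulmxA.
  by rewrite -[_ *m Q^t* *m Q]mulmxA (unitary_tK uQ) mulmx1.
by rewrite kK mulmx1 (unitary_Kt uP).
Qed.

Definition wr (z : C) : R := (complex.Re z) ^+ 2 + (complex.Im z) ^+ 2.

Lemma zconj (z : C) : z * Num.conj z = (wr z)%:C.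
Proof. by rewrite /wr add_Re2_Im2 normCK. Qed.

Lemma wr_ge0 (z : C) : 0 <= wr z.
Proof. by rewrite /wr addr_ge0 // sqr_ge0. Qed.

End Mat.

Section Final.
Variable R : realType.
Local Notation C := R[i].

Lemma ClassMain (a : R) n m (W : 'I_m -> 'I_n -> R) (p q : 'I_n -> R) : 0 < a ->
  (forall j i, 0 <= W j i) -> (forall i, \sum_j W j i = 1) ->
  (forall i, 0 <= p i) -> (forall i, 0 < q i) -> (forall i, a * p i <= q i) ->
  (forall j, 0 < \sum_i W j i * q i) ->
  \sum_i phi a (p i) (q i) <=
  \sum_j phi a (\sum_i W j i * p i) (\sum_i W j i * q i).
Proof.
move=> a0 W0 Ws p0 q0 apq Q0.
have -> : \sum_i phi a (p i) (q i) = \sum_i \sum_j W j i * phi a (p i) (q i).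
  by apply: eq_bigr => i _; rewrite -mulr_suml Ws mul1r.
rewrite exchange_big /=; apply: ler_sum => j _.
exact: ClassJ.
Qed.

End Final.

Section Final2.
Variable R : realType.
Local Notation C := R[i].

Lemma tr_entry m n (B : 'M[C]_(m,n)) i : (B^t* *m B) i i = \sum_j (wr (B j i))%:C.
Proof. by rewrite mxE; apply: eq_bigr => j _; rewrite !mxE mulrC zconj. Qed.

Definition Wt n m (Ks : seq 'M[C]_(m,n)) (P : 'M[C]_n) (Q : 'M[C]_m) j i :=
  \sum_(K <- Ks) wr ((Q *m K *m P^t*) j i).

Lemma Wt_ge0 n m (Ks : seq 'M[C]_(m,n)) P Q j i : 0 <= Wt Ks P Q j i.
Proof. by apply: sumr_ge0 => K _; exact: wr_ge0. Qed.

Lemma Wt_sum n m (Ks : seq 'M[C]_(m,n)) P Q i :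
  P \is unitarymx -> Q \is unitarymx -> is_kraus Ks ->
  \sum_j Wt Ks P Q j i = 1.
Proof.
move=> uP uQ kK.
move/matrixP: (kraus_sum uP uQ kK) => /(_ i i).
rewrite summxE [RHS]mxE eqxx mulr1n.
under eq_bigr do rewrite tr_entry.
rewrite exchange_big /= => h.
apply: (@complexI R); rewrite rmorph_sum -[RHS]h /=; apply: eq_bigr => j _.
by rewrite /Wt rmorph_sum.
Qed.

Lemma channel_diag n m (Ks : seq 'M[C]_(m,n)) (P : 'M[C]_n) (Q : 'M[C]_m) a a'
  (p : 'I_n -> R) : P \is unitarymx -> Q \is unitarymx ->
  kraus_channel Ks (cj P a) = cj Q a' -> a = \row_i (p i)%:C ->
  forall j, a' 0 j = (\sum_i Wt Ks P Q j i * p i)%:C.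
Proof.
move=> uP uQ h ha j.
have e1 : Q *m kraus_channel Ks (cj P a) *m Q^t* = diag_mx a'.
  rewrite h !cjE !mulmxA (unitary_Kt uQ) mul1mx -mulmxA (unitary_Kt uQ).
  by rewrite mulmx1.
move/matrixP: e1 => /(_ j j); rewrite kraus_cj summxE [RHS]mxE eqxx mulr1n => <-.
under eq_bigr do rewrite diag_entry.
rewrite exchange_big /= rmorph_sum; apply: eq_bigr => i _.
rewrite -mulr_suml ha mxE rmorphM /Wt rmorph_sum; congr (_ * _).
by apply: eq_bigr => K _; exact: zconj.
Qed.


Lemma cjM_real n (P : 'M[C]_n) (u v : 'I_n -> R) : P \is unitarymx ->
  cj P (\row_j (u j)%:C) *m cj P (\row_j (v j)%:C) = cj P (\row_j (u j * v j)%:C).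
Proof.
move=> uP; rewrite (cjM _ _ uP); congr (cj P _); apply/rowP => j.
by rewrite !mxE rmorphM.
Qed.

Lemma tr_cj_real n (P : 'M[C]_n) (u : 'I_n -> R) : P \is unitarymx ->
  complex.Re (\tr (cj P (\row_j (u j)%:C))) = \sum_j u j.
Proof.
move=> uP; rewrite (cj_tr _ uP).
under eq_bigr do rewrite mxE.
by rewrite -rmorph_sum.
Qed.

Lemma var_id n (p l : 'I_n -> R) (c : R) : \sum_j p j = 1 ->
  \sum_j p j * (l j * l j) - (\sum_j p j * l j) ^+ 2 + (c - \sum_j p j * l j) ^+ 2
  = \sum_j p j * (l j - c) ^+ 2.
Proof.
move=> hp.
have -> : \sum_j p j * (l j - c) ^+ 2 =
    \sum_j (p j * (l j * l j) + (-2 * c) * (p j * l j) + c ^+ 2 * p j).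
  by apply: eq_bigr => j _; ring.
rewrite !big_split /= -!mulr_sumr hp; ring.
Qed.

Lemma ln2_neq0 : ln (2 : R) != 0.
Proof. by rewrite gt_eqF // ln_gt0 // ltr1n. Qed.

Lemma Mx_cj n (P : 'M[C]_n) (p q : 'I_n -> R) x : P \is unitarymx -> \sum_j p j = 1 ->
  Mx x (cj P (\row_j (p j)%:C)) (cj P (\row_j (q j)%:C)) =
  (\sum_j phi x (p j) (q j)) / (ln 2) ^+ 2.
Proof.
move=> uP hp.
have lg (r : 'I_n -> R) : map_mx (fun z : C => (log2 (complex.Re z))%:C) (\row_j (r j)%:C)
    = \row_j (log2 (r j))%:C.
  by apply/rowP => j; rewrite !mxE.
rewrite /Mx /relvar /relent /logm; cbv beta zeta.
rewrite (mxfun_cj _ _ uP).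
rewrite (mxfun_cj _ _ uP).
rewrite !lg. rewrite cjB.
have -> : \row_j (log2 (p j))%:C - \row_j (log2 (q j))%:C =
    \row_j (log2 (p j) - log2 (q j))%:C :> 'rV[C]_n.
  by apply/rowP => j; rewrite !mxE rmorphB.
pose l j := log2 (p j) - log2 (q j).
rewrite -/(l _).
rewrite (cjM_real l l uP).
rewrite (cjM_real p (fun j => l j * l j) uP).
rewrite (cjM_real p l uP).
rewrite !(tr_cj_real _ uP). rewrite (var_id _ _ hp) mulr_suml.
apply: eq_bigr => j _; rewrite /phi /l /log2.
have := ln2_neq0; move: (ln (2:R)) => t t0.
by field.
Qed.

Lemma diag_state n (A B : 'M[C]_n) : is_state A -> is_state B -> mxcommute A B ->
  exists P a b, [/\ P \is unitarymx, A = cj P a & B = cj P b].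
Proof.
move=> sA sB AB; have [P [uP eA eB]] := diagonalize sA.1.1 sB.1.1 AB.
exists P; eexists; eexists; split; [exact: uP | exact: eA | exact: eB].
Qed.

Lemma state_real n (P : 'M[C]_n) a : P \is unitarymx -> is_state (cj P a) ->
  exists p : 'I_n -> R, [/\ a = \row_j (p j)%:C, forall j, 0 <= p j & \sum_j p j = 1].
Proof.
move=> uP sA; case: (state_cj uP sA) => h1 h2 h3.
exists (fun j => complex.Re (a 0 j)); split; [|exact: h2|exact: h3].
by apply/rowP => j; rewrite mxE; exact: h1.
Qed.

Lemma fr_pos n (P : 'M[C]_n) (q : 'I_n -> R) : P \is unitarymx ->
  full_rank (cj P (\row_j (q j)%:C)) -> (forall j, 0 <= q j) -> forall j, 0 < q j.
Proof.
move=> uP fr q0 j.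
have ub : cj P (\row_j (q j)%:C) \in unitmx.
  by rewrite -row_free_unit /row_free; apply/eqP; exact: fr.
have := cj_unit_neq0 j uP ub; rewrite mxE => hz.
rewrite lt_def q0 andbT; apply/eqP => qz; move: hz; rewrite qz rmorph0 eqxx.
by [].
Qed.

Lemma smin_props n (P : 'M[C]_n) (q : 'I_n -> R) s : P \is unitarymx ->
  min_eigenvalue (cj P (\row_j (q j)%:C)) s -> (forall j, 0 < q j) ->
  0 < s /\ forall j, s <= q j.
Proof.
move=> uP [es les] qpos; split.
  have [i hi] := eigen_cj uP es.
  by move: hi; rewrite mxE => /(congr1 (@complex.Re R)) /= ->; exact: qpos.
move=> j; have := les _ (cj_eigen (\row_j (q j)%:C) j uP).
by rewrite mxE lecR.
Qed.

End Final2.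


Theorem theorem12 (R : realType) (n m : nat)
  (rho sigma : 'M[R[i]]_n) (rho' sigma' : 'M[R[i]]_m) (smin : R) :
  is_state rho -> is_state sigma -> mxcommute rho sigma -> full_rank sigma ->
  is_state rho' -> is_state sigma' -> mxcommute rho' sigma' -> full_rank sigma' ->
  min_eigenvalue sigma smin ->
  majorizes rho sigma rho' sigma' ->
  Mx smin rho' sigma' >= Mx smin rho sigma.
Proof.
move=> sr ss crs frs sr' ss' crs' frs' hmin [Ks [kK [ch1 ch2]]].
have [P [a [b [uP er es]]]] := diag_state sr ss crs.
have [Q [a' [b' [uQ er' es']]]] := diag_state sr' ss' crs'.
subst rho sigma.
rewrite er' in sr' ch1; rewrite es' in ss' ch2 frs'; rewrite er' es'.
have [p [ha p0 ps]] := state_real uP sr.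
have [q [hb q0 qs]] := state_real uP ss.
have [p' [ha' p0' ps']] := state_real uQ sr'.
have [q' [hb' q0' qs']] := state_real uQ ss'.
have hp' := channel_diag uP uQ ch1 ha.
have hq' := channel_diag uP uQ ch2 hb.
rewrite hb in frs hmin; rewrite hb' in frs'.
have qpos := fr_pos uP frs q0.
have qpos' := fr_pos uQ frs' q0'.
have [s0 sle] := smin_props uP hmin qpos.
have ep' j : p' j = \sum_i Wt Ks P Q j i * p i.
  by move: (hp' j); rewrite ha' mxE => /(congr1 (@complex.Re R)).
have eq' j : q' j = \sum_i Wt Ks P Q j i * q i.
  by move: (hq' j); rewrite hb' mxE => /(congr1 (@complex.Re R)).
rewrite ha hb ha' hb' !Mx_cj //.
apply: ler_wpM2r; first by rewrite invr_ge0 sqr_ge0.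
have -> : \sum_j phi smin (p' j) (q' j) =
    \sum_j phi smin (\sum_i Wt Ks P Q j i * p i) (\sum_i Wt Ks P Q j i * q i).
  by apply: eq_bigr => j _; rewrite ep' eq'.
apply: ClassMain => //.
- by move=> j i; exact: Wt_ge0.
- by move=> i; exact: Wt_sum.
- move=> i; have pi1 : p i <= 1.
    by rewrite -ps (bigD1 i) //= lerDl sumr_ge0.
  have := sle i; have := p0 i; nra.
- by move=> j; rewrite -eq'; exact: qpos'.
Qed.
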